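(* Let $(X,Y,Z,W)$ be a solution of system (S) on $(-\infty,t_{max})$. Assume $Y,W>0$, $\lim_{t\to-\infty}(X,Y,Z,W)(t)=(0,0,1,0)$, and $\mathcal C>0$. Normalize $g$ so that $\lambda=\lim_{t\to-\infty}g(t)>0$, and let $\mathcal C$ be the first-integral constant for this normalization. Then the limit $\lim_{t\to-\infty}\frac{1-Z}{Y^2}$ exists and $$\mathcal C\lambda^2=2\lim_{t\to-\infty}\frac{1-Z}{Y^2}-A_2.$$
   Context: Fix a positive integer $d$ and a real number $q$. Put $A_2=d(d+2)$ and $A_3=\tfrac14 d(d+2)^2q^2$. System (S) is $$X'=X(dX^2+Z^2-1)+\tfrac{A_2}{d}Y^2-2\tfrac{A_3}{d}W^2,\qquad Y'=Y(dX^2+Z^2-X),$$ $$Z'=Z(dX^2+Z^2-1)+A_3W^2,\qquad W'=W(dX^2+Z^2-2X+Z).$$ For a solution, $g$ is a positive solution of $g'=gX$ (unique up to a positive constant) and $\mathcal L=gY$. The first integral reads $dX^2+A_2Y^2+Z^2-A_3W^2=1-\mathcal C\mathcal L^2$ for a constant $\mathcal C$, whose sign is independent of the normalization of $g$. Under the hypotheses, $\int_{-\infty}X\,dt$ is finite, so $\lambda=\lim_{t\to-\infty}g(t)$ exists and fixes the normalization. *)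

(* Defs.v *)
From Stdlib Require Import Reals.
Open Scope R_scope.

(* Right endpoint of the interval (-oo, tmax): Some b means tmax = b,
   None means tmax = +oo. *)
Definition in_dom (tmax : option R) (t : R) : Prop :=
  match tmax with Some b => t < b | None => True end.

Definition lim_minf (tmax : option R) (f : R -> R) (l : R) : Prop :=
  forall eps : R, 0 < eps ->
    exists M : R, forall t : R, t < M -> in_dom tmax t -> Rabs (f t - l) < eps.

Definition A2 (d : nat) : R := INR d * (INR d + 2).
Definition A3 (d : nat) (q : R) : R := / 4 * INR d * (INR d + 2) ^ 2 * q ^ 2.

Definition solves_S (d : nat) (q : R) (tmax : option R)
    (X Y Z W : R -> R) : Prop :=
  forall t : R, in_dom tmax t ->
    derivable_pt_lim X t
      (X t * (INR d * X t ^ 2 + Z t ^ 2 - 1) + A2 d / INR d * Y t ^ 2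
        - 2 * (A3 d q / INR d) * W t ^ 2) /\
    derivable_pt_lim Y t (Y t * (INR d * X t ^ 2 + Z t ^ 2 - X t)) /\
    derivable_pt_lim Z t
      (Z t * (INR d * X t ^ 2 + Z t ^ 2 - 1) + A3 d q * W t ^ 2) /\
    derivable_pt_lim W t
      (W t * (INR d * X t ^ 2 + Z t ^ 2 - 2 * X t + Z t)).

(* Main.v *)
Require Import Defs.
From Stdlib Require Import Reals Lra Psatz Classical.
Open Scope R_scope.

Lemma dlim_cont f x l : derivable_pt_lim f x l -> continuity_pt f x.
Proof. intro H. apply derivable_continuous_pt. exists l. exact H. Qed.

Lemma dlim_ext f g x l l' : (forall y, f y = g y) -> l = l' ->
  derivable_pt_lim f x l -> derivable_pt_lim g x l'.
Proof.
  intros Hfg <- H eps Heps. destruct (H eps Heps) as [del Hd].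
  exists del. intros h Hh Hh'. rewrite <- !Hfg. apply Hd; auto.
Qed.

Lemma mono_le f f' a b : a <= b ->
  (forall c, a <= c <= b -> derivable_pt_lim f c (f' c)) ->
  (forall c, a <= c <= b -> 0 <= f' c) -> f a <= f b.
Proof.
  intros Hab Hd Hp. destruct (Rle_lt_or_eq_dec a b Hab) as [H|H].
  - destruct (MVT_cor2 f f' a b H Hd) as [c [Hc1 Hc2]].
    assert (0 <= f' c) by (apply Hp; lra). nra.
  - subst; lra.
Qed.

Lemma barrier F F' M :
  (forall t, t <= M -> derivable_pt_lim F t (F' t)) ->
  (forall t, t <= M -> 0 < F t -> F' t < 0) ->
  (forall eps, 0 < eps -> exists N, forall t, t < N -> F t < eps) ->
  forall t, t <= M -> F t <= 0.
Proof.
  intros Hd Hneg Hlim t1 Ht1. destruct (Rle_or_lt (F t1) 0) as [|Hpos]; auto.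
  exfalso. destruct (Hlim (F t1) Hpos) as [N HN].
  set (t0 := Rmin N t1 - 1).
  assert (Ht0 : t0 < t1) by (unfold t0; generalize (Rmin_r N t1); lra).
  assert (HFt0 : F t0 < F t1) by (apply HN; unfold t0; generalize (Rmin_l N t1); lra).
  destruct (continuity_ab_maj F t0 t1) as [m [Hm1 Hm2]]; [lra| |].
  { intros c Hc. apply (dlim_cont F c (F' c)). apply Hd. lra. }
  assert (Hmt1 : F t1 <= F m) by (apply Hm1; lra).
  assert (Hmlt : t0 < m).
  { destruct (Rle_lt_or_eq_dec t0 m (proj1 Hm2)) as [|e]; auto. subst m. lra. }
  assert (HF'm : F' m < 0) by (apply Hneg; lra).
  destruct (Hd m ltac:(lra) (- F' m / 2) ltac:(lra)) as [del Hdel].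
  set (h := - Rmin (del / 2) (m - t0)).
  assert (Hh1 : 0 < Rmin (del/2) (m - t0)).
  { apply Rmin_glb_lt; [generalize (cond_pos del)|]; lra. }
  assert (Hh2 : Rmin (del/2) (m - t0) <= del/2) by apply Rmin_l.
  assert (Hh3 : Rmin (del/2) (m - t0) <= m - t0) by apply Rmin_r.
  assert (Hh0 : h <> 0) by (unfold h; lra).
  assert (Hha : Rabs h < del).
  { unfold h. rewrite Rabs_Ropp, Rabs_pos_eq; generalize (cond_pos del); lra. }
  specialize (Hdel h Hh0 Hha).
  assert (Hle : F (m + h) <= F m) by (apply Hm1; unfold h; lra).
  assert (Hq : 0 <= (F (m + h) - F m) / h).
  { unfold Rdiv. replace ((F (m + h) - F m) * / h) with ((F m - F (m+h)) * / (-h)) by (field; auto).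
    apply Rmult_le_pos; [lra|]. left. apply Rinv_0_lt_compat. unfold h; lra. }
  apply Rabs_def2 in Hdel. lra.
Qed.

Definition ev (tmax : option R) (P : R -> Prop) :=
  exists M, forall t, t < M -> in_dom tmax t -> P t.

Lemma ev_and tm P Q : ev tm P -> ev tm Q -> ev tm (fun t => P t /\ Q t).
Proof.
  intros [M1 H1] [M2 H2]. exists (Rmin M1 M2). intros t Ht Hd.
  split; [apply H1|apply H2]; auto.
  - generalize (Rmin_l M1 M2); lra.
  - generalize (Rmin_r M1 M2); lra.
Qed.

Lemma ev_mono tm (P Q : R -> Prop) : ev tm P -> (forall t, in_dom tm t -> P t -> Q t) -> ev tm Q.
Proof. intros [M H] HPQ. exists M. intros t Ht Hd. apply HPQ; auto. Qed.

Lemma lim_ev tm f l eps : lim_minf tm f l -> 0 < eps -> ev tm (fun t => Rabs (f t - l) < eps).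
Proof. intros H He. exact (H eps He). Qed.

Lemma lim_ext tm f g l : ev tm (fun t => f t = g t) -> lim_minf tm f l -> lim_minf tm g l.
Proof.
  intros He Hf eps Heps. destruct (ev_and _ _ _ He (Hf eps Heps)) as [M HM].
  exists M. intros t Ht Hd. destruct (HM t Ht Hd) as [E1 E2]. rewrite <- E1. auto.
Qed.

Lemma lim_const tm c : lim_minf tm (fun _ => c) c.
Proof. intros eps He. exists 0. intros. rewrite Rminus_diag, Rabs_R0. auto. Qed.

Lemma lim_plus tm f g l m : lim_minf tm f l -> lim_minf tm g m ->
  lim_minf tm (fun t => f t + g t) (l + m).
Proof.
  intros Hf Hg eps He.
  destruct (ev_and _ _ _ (Hf (eps/2) ltac:(lra)) (Hg (eps/2) ltac:(lra))) as [M HM].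
  exists M. intros t Ht Hd. destruct (HM t Ht Hd) as [E1 E2].
  replace (f t + g t - (l + m)) with ((f t - l) + (g t - m)) by ring.
  generalize (Rabs_triang (f t - l) (g t - m)). lra.
Qed.

Lemma lim_mult tm f g l m : lim_minf tm f l -> lim_minf tm g m ->
  lim_minf tm (fun t => f t * g t) (l * m).
Proof.
  intros Hf Hg eps He.
  set (eta := Rmin 1 (eps / (Rabs l + Rabs m + 1))).
  assert (Hl := Rabs_pos l). assert (Hm := Rabs_pos m).
  assert (Heta : 0 < eta).
  { apply Rmin_glb_lt; [lra|]. apply Rdiv_lt_0_compat; lra. }
  assert (Heta1 : eta <= 1) by apply Rmin_l.
  assert (Heta2 : eta * (Rabs l + Rabs m + 1) <= eps).
  { assert (eta <= eps / (Rabs l + Rabs m + 1)) by apply Rmin_r.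
    apply Rmult_le_compat_r with (r := Rabs l + Rabs m + 1) in H; [|lra].
    unfold Rdiv in H. rewrite Rmult_assoc, Rinv_l in H; lra. }
  destruct (ev_and _ _ _ (Hf eta Heta) (Hg eta Heta)) as [M HM].
  exists M. intros t Ht Hd. destruct (HM t Ht Hd) as [E1 E2].
  replace (f t * g t - l * m) with ((f t - l) * (g t - m) + l * (g t - m) + m * (f t - l)) by ring.
  set (a := f t - l) in *. set (b := g t - m) in *.
  generalize (Rabs_triang (a * b + l * b) (m * a)).
  generalize (Rabs_triang (a * b) (l * b)).
  rewrite !Rabs_mult.
  assert (Ha := Rabs_pos a). assert (Hb := Rabs_pos b).
  intros. nra.
Qed.

Lemma lim_inv tm f l : lim_minf tm f l -> l <> 0 ->
  lim_minf tm (fun t => / f t) (/ l).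
Proof.
  intros Hf Hl eps He.
  assert (Hal : 0 < Rabs l) by (apply Rabs_pos_lt; auto).
  set (eta := Rmin (Rabs l / 2) (eps * (Rabs l * Rabs l) / 2)).
  assert (Heta : 0 < eta).
  { apply Rmin_glb_lt; [lra|]. assert (0 < Rabs l * Rabs l) by nra. nra. }
  assert (H1 : eta <= Rabs l / 2) by apply Rmin_l.
  assert (H2 : eta <= eps * (Rabs l * Rabs l) / 2) by apply Rmin_r.
  destruct (Hf eta Heta) as [M HM]. exists M. intros t Ht Hd.
  specialize (HM t Ht Hd).
  assert (Hft : Rabs l / 2 < Rabs (f t)).
  { assert (Hti := Rabs_triang_inv l (l - f t)).
    replace (l - (l - f t)) with (f t) in Hti by ring.
    assert (Rabs (l - f t) = Rabs (f t - l)) by (rewrite <- Rabs_Ropp; f_equal; ring).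
    lra. }
  assert (Hf0 : f t <> 0). { intro E. rewrite E, Rabs_R0 in Hft. lra. }
  replace (/ f t - / l) with ((l - f t) * / (f t * l)) by (field; auto).
  rewrite Rabs_mult, Rabs_inv, Rabs_mult.
  rewrite <- Rabs_Ropp. replace (- (l - f t)) with (f t - l) by ring.
  assert (Hp : 0 < Rabs (f t) * Rabs l) by nra.
  apply (Rmult_lt_reg_r (Rabs (f t) * Rabs l)); auto.
  rewrite Rmult_assoc, Rinv_l by lra. nra.
Qed.

Lemma lim_squeeze0 tm f h : ev tm (fun t => Rabs (f t) <= h t) -> lim_minf tm h 0 ->
  lim_minf tm f 0.
Proof.
  intros He Hh eps Heps. destruct (ev_and _ _ _ He (Hh eps Heps)) as [M HM].
  exists M. intros t Ht Hd. destruct (HM t Ht Hd) as [E1 E2].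
  rewrite Rminus_0_r in *. apply Rabs_def2 in E2. lra.
Qed.

Lemma ev_closed tm P : ev tm P ->
  exists M, (forall t, t <= M -> in_dom tm t) /\ (forall t, t <= M -> P t).
Proof.
  intros [M HM]. destruct tm as [b|].
  - exists (Rmin M b - 1). assert (Rmin M b <= M) by apply Rmin_l.
    assert (Rmin M b <= b) by apply Rmin_r.
    split; intros t Ht; simpl in *; [lra|]. apply HM; simpl; lra.
  - exists (M - 1). split; intros t Ht; simpl; auto. apply HM; simpl; auto; lra.
Qed.

Lemma near_facts D x z : 1 <= D -> Rabs x < /(10*(D+1)) -> Rabs (z-1) < /(10*(D+1)) ->
  Rabs x <= 1 /\ 1/2 <= D*x^2+z^2-x /\ D*x^2 + z^2 - x <= 2 /\
  0 <= 2*z - D*x^2 - z^2 - x /\ 1/2 <= z.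
Proof.
  intros HD Hx Hz. set (e := /(10*(D+1))) in *.
  assert (He : 0 < e) by (unfold e; apply Rinv_0_lt_compat; lra).
  assert (HeD : e * (10*(D+1)) = 1) by (unfold e; field; lra).
  assert (He1 : e <= 1/20) by nra.
  assert (He2 : D * e <= 1/10) by nra.
  apply Rabs_def2 in Hx. apply Rabs_def2 in Hz.
  assert (Hx2 : x^2 <= e*e) by nra.
  assert (HDx : D * x^2 <= e / 10) by nra.
  assert (0 <= D * x^2) by nra.
  repeat split.
  - apply Rabs_le; lra.
  - nra.
  - nra.
  - nra.
  - lra.
Qed.

Lemma dummy0 : True. Proof. exact I. Qed.

Lemma bar1 D A2 A3 C K x y z w G : 1 <= D -> A2 = D*(D+2) -> 0 <= A3 -> 0 < C -> 0 < y ->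
  Rabs x <= 1 -> w^2 <= y^2 -> 1/2 <= D*x^2+z^2-x -> K = 3*A3 + A2 + 1 ->
  D*x^2 + A2*y^2 + z^2 - A3*w^2 = 1 - C*(G*y)^2 ->
  0 < x - K*(y*y) ->
  x*(D*x^2+z^2-1) + A2/D*y^2 - 2*(A3/D)*w^2 - 2*K*y^2*(D*x^2+z^2-x) < 0.
Proof.
  intros HD HA2 HA3 HC Hy Hx Hw Hr HK Hfi Hpos.
  assert (HK0 : 0 < K) by (subst; nra).
  assert (Hx0 : 0 < x) by nra.
  assert (Hxa : -1 <= x <= 1) by (unfold Rabs in Hx; destruct (Rcase_abs x); lra).
  assert (E1 : D*x^2+z^2-1 = A3*w^2 - (A2 + C*G^2)*y^2) by (rewrite Rpow_mult_distr in Hfi; nra).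
  assert (T1 : x*(D*x^2+z^2-1) <= A3*y^2).
  { rewrite E1. assert (0 <= C*G^2*y^2) by (apply Rmult_le_pos; [apply Rmult_le_pos; [lra|apply pow2_ge_0]|apply pow2_ge_0]).
    assert (0 <= A2*y^2) by (subst; apply Rmult_le_pos; [nra|apply pow2_ge_0]).
    assert (0 <= w^2) by apply pow2_ge_0.
    assert (0 <= A3*w^2) by nra.
    assert (x*(A3*w^2) <= A3*w^2) by nra.
    assert (0 <= x*((A2+C*G^2)*y^2)) by nra.
    assert (A3*w^2 <= A3*y^2) by nra.
    replace (x * (A3 * w ^ 2 - (A2 + C * G ^ 2) * y ^ 2)) with (x*(A3*w^2) - x*((A2+C*G^2)*y^2)) by ring.
    lra. }
  assert (T2 : A2/D*y^2 <= A2*y^2).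
  { replace (A2/D) with (D+2) by (rewrite HA2; field; lra). rewrite HA2.
    assert (0 <= y^2) by apply pow2_ge_0.
    assert (0 <= (D-1)*((D+2)*y^2)) by (apply Rmult_le_pos; [lra|apply Rmult_le_pos; lra]).
    lra. }
  assert (T3 : 0 <= 2*(A3/D)*w^2).
  { assert (0 <= A3/D) by (unfold Rdiv; apply Rmult_le_pos; [lra| left; apply Rinv_0_lt_compat; lra]). assert (0 <= w^2) by apply pow2_ge_0. nra. }
  assert (0 < y^2) by nra.
  assert (0 <= K*y^2) by nra.
  assert (T4 : K*y^2 <= 2*K*y^2*(D*x^2+z^2-x)) by nra.
  assert (K*y^2 = 3*(A3*y^2) + A2*y^2 + y^2) by (rewrite HK; ring).
  assert (0 <= A3*y^2) by nra.
  lra.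
Qed.

Lemma bar2 D A2 A3 C K x y z w G : 1 <= D -> A2 = D*(D+2) -> 0 <= A3 -> 0 < C -> 0 < y ->
  Rabs x <= 1 -> w^2 <= y^2 -> 1/2 <= D*x^2+z^2-x -> K = 3*A3 + A2 + 1 ->
  D*x^2 + A2*y^2 + z^2 - A3*w^2 = 1 - C*(G*y)^2 ->
  0 < - x - K*(y*y) ->
  - (x*(D*x^2+z^2-1) + A2/D*y^2 - 2*(A3/D)*w^2) - 2*K*y^2*(D*x^2+z^2-x) < 0.
Proof.
  intros HD HA2 HA3 HC Hy Hx Hw Hr HK Hfi Hpos.
  assert (HK0 : 0 < K) by (subst; nra).
  assert (Hx0 : x < 0) by nra.
  assert (Hxa : -1 <= x <= 1) by (unfold Rabs in Hx; destruct (Rcase_abs x); lra).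
  assert (E1 : D*x^2+z^2-1 = A3*w^2 - (A2 + C*G^2)*y^2) by (rewrite Rpow_mult_distr in Hfi; nra).
  assert (T1 : - (x*(D*x^2+z^2-1)) <= A3*y^2).
  { rewrite E1. assert (0 <= C*G^2*y^2) by (apply Rmult_le_pos; [apply Rmult_le_pos; [lra|apply pow2_ge_0]|apply pow2_ge_0]).
    assert (0 <= A2*y^2) by (subst; apply Rmult_le_pos; [nra|apply pow2_ge_0]).
    assert (0 <= w^2) by apply pow2_ge_0.
    assert (0 <= A3*w^2) by nra.
    assert (-x*(A3*w^2) <= A3*w^2) by nra.
    assert (x*((A2+C*G^2)*y^2) <= 0) by nra.
    assert (A3*w^2 <= A3*y^2) by nra.
    replace (- (x * (A3 * w ^ 2 - (A2 + C * G ^ 2) * y ^ 2))) with (-x*(A3*w^2) + x*((A2+C*G^2)*y^2)) by ring.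
    lra. }
  assert (T2 : 0 <= A2/D*y^2).
  { replace (A2/D) with (D+2) by (subst; field; lra). assert (0<=y^2) by apply pow2_ge_0. nra. }
  assert (T3 : 2*(A3/D)*w^2 <= 2*A3*y^2).
  { assert (A3/D <= A3). { unfold Rdiv. assert (/D <= 1). { rewrite <- Rinv_1. apply Rinv_le_contravar; lra. } nra. }
    assert (0 <= A3/D) by (unfold Rdiv; apply Rmult_le_pos; [lra| left; apply Rinv_0_lt_compat; lra]). assert (0 <= w^2) by apply pow2_ge_0. nra. }
  assert (0 < y^2) by nra.
  assert (0 <= K*y^2) by nra.
  assert (T4 : K*y^2 <= 2*K*y^2*(D*x^2+z^2-x)) by nra.
  assert (K*y^2 = 3*(A3*y^2) + A2*y^2 + y^2) by (rewrite HK; ring).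
  assert (0 <= A2*y^2) by (rewrite HA2; assert (0<=y^2) by apply pow2_ge_0; nra). assert (0 <= A3*y^2) by nra.
  lra.
Qed.

Lemma lim_to_upper tm F M : lim_minf tm F 0 -> (forall t, t <= M -> in_dom tm t) ->
  forall eps, 0 < eps -> exists N, forall t, t < N -> F t < eps.
Proof.
  intros HF HM eps He. destruct (HF eps He) as [N HN]. exists (Rmin N M).
  intros t Ht. assert (Rmin N M <= N) by apply Rmin_l. assert (Rmin N M <= M) by apply Rmin_r.
  specialize (HN t ltac:(lra) (HM t ltac:(lra))). rewrite Rminus_0_r in HN.
  apply Rabs_def2 in HN. lra.
Qed.

Lemma deriv_h (W Y : R -> R) t w' y' : derivable_pt_lim W t w' -> derivable_pt_lim Y t y' -> Y t * Y t * Y t <> 0 ->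
  derivable_pt_lim (fun s => W s * W s / (Y s * Y s * Y s)) t
   (((w'*W t + W t*w')*(Y t*Y t*Y t) - ((y'*Y t + Y t*y')*Y t + Y t*Y t*y')*(W t*W t))/(Y t*Y t*Y t)²).
Proof.
  intros H1 H2 H3.
  exact (derivable_pt_lim_div (mult_fct W W) (mult_fct (mult_fct Y Y) Y) t _ _
     (derivable_pt_lim_mult _ _ _ _ _ H1 H1)
     (derivable_pt_lim_mult _ _ _ _ _ (derivable_pt_lim_mult _ _ _ _ _ H2 H2) H2) H3).
Qed.

Lemma deriv_F (X Y : R -> R) c K t x' y' : derivable_pt_lim X t x' -> derivable_pt_lim Y t y' ->
  derivable_pt_lim (fun s => c * X s - K * (Y s * Y s)) t (c * x' - K * (y' * Y t + Y t * y')).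
Proof.
  intros H1 H2.
  exact (derivable_pt_lim_minus (mult_real_fct c X) (mult_real_fct K (mult_fct Y Y)) t _ _
     (derivable_pt_lim_scal _ _ _ _ H1)
     (derivable_pt_lim_scal _ _ _ _ (derivable_pt_lim_mult _ _ _ _ _ H2 H2))).
Qed.

Lemma lim_F tm (X Y : R -> R) c K : lim_minf tm X 0 -> lim_minf tm Y 0 ->
  lim_minf tm (fun s => c * X s - K * (Y s * Y s)) 0.
Proof.
  intros HX HY.
  assert (H := lim_plus tm _ _ _ _ (lim_mult tm _ _ _ _ (lim_const tm c) HX)
     (lim_mult tm _ _ _ _ (lim_const tm (-K)) (lim_mult tm _ _ _ _ HY HY))).
  replace (c * 0 + - K * (0 * 0)) with 0 in H by ring.
  eapply lim_ext; [|exact H]. exists 0. intros. simpl. ring.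
Qed.

Lemma deriv_q (g Y : R -> R) K t g' y' : derivable_pt_lim g t g' -> derivable_pt_lim Y t y' ->
  derivable_pt_lim (fun s => g s * (1 + 2*K*(Y s*Y s))) t
    (g' * (1 + 2*K*(Y t*Y t)) + g t * (0 + 2*K*(y'*Y t + Y t*y'))).
Proof.
  intros H1 H2.
  exact (derivable_pt_lim_mult g (plus_fct (fct_cte 1) (mult_real_fct (2*K) (mult_fct Y Y))) t _ _ H1
     (derivable_pt_lim_plus _ _ _ _ _ (derivable_pt_lim_const 1 t)
        (derivable_pt_lim_scal _ _ _ _ (derivable_pt_lim_mult _ _ _ _ _ H2 H2)))).
Qed.

Lemma deriv_p (g Y : R -> R) K t g' y' : derivable_pt_lim g t g' -> derivable_pt_lim Y t y' ->
  1 + 2*K*(Y t*Y t) <> 0 ->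
  derivable_pt_lim (fun s => g s / (1 + 2*K*(Y s*Y s))) t
    ((g' * (1 + 2*K*(Y t*Y t)) - (0 + 2*K*(y'*Y t + Y t*y')) * g t) / (1 + 2*K*(Y t*Y t))²).
Proof.
  intros H1 H2 H3.
  exact (derivable_pt_lim_div g (plus_fct (fct_cte 1) (mult_real_fct (2*K) (mult_fct Y Y))) t _ _ H1
     (derivable_pt_lim_plus _ _ _ _ _ (derivable_pt_lim_const 1 t)
        (derivable_pt_lim_scal _ _ _ _ (derivable_pt_lim_mult _ _ _ _ _ H2 H2))) H3).
Qed.

Theorem proposition2p3 (d : nat) (q : R) (tmax : option R)
    (X Y Z W g : R -> R) (C : R) :
  (1 <= d)%nat ->
  solves_S d q tmax X Y Z W ->
  (forall t, in_dom tmax t -> 0 < Y t /\ 0 < W t) ->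
  lim_minf tmax X 0 -> lim_minf tmax Y 0 ->
  lim_minf tmax Z 1 -> lim_minf tmax W 0 ->
  (forall t, in_dom tmax t -> 0 < g t /\ derivable_pt_lim g t (g t * X t)) ->
  (forall t, in_dom tmax t ->
     INR d * X t ^ 2 + A2 d * Y t ^ 2 + Z t ^ 2 - A3 d q * W t ^ 2
       = 1 - C * (g t * Y t) ^ 2) ->
  0 < C ->
  exists lambda l : R,
    0 < lambda /\ lim_minf tmax g lambda /\
    lim_minf tmax (fun t => (1 - Z t) / Y t ^ 2) l /\
    C * lambda ^ 2 = 2 * l - A2 d.
Proof.
  intros Hd HS HYW HX HY HZ HW Hg HFI HC.
  set (D := INR d).
  assert (HD : 1 <= D) by (unfold D; change 1 with (INR 1); apply le_INR; lia).
  assert (HA2 : A2 d = D*(D+2)) by reflexivity.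
  assert (HA3 : 0 <= A3 d q).
  { unfold A3. fold D. assert (0 <= (D+2)^2) by apply pow2_ge_0. assert (0 <= q^2) by apply pow2_ge_0.
    assert (0 <= / 4 * D) by lra. apply Rmult_le_pos; [apply Rmult_le_pos|]; nra. }
  set (a2 := A2 d) in *. set (a3 := A3 d q) in *.
  set (K := 3*a3 + a2 + 1).
  assert (HK : 0 < K) by (unfold K; rewrite HA2; nra).
  set (e := /(10*(D+1))).
  assert (He : 0 < e) by (unfold e; apply Rinv_0_lt_compat; lra).
  assert (Hev0 : ev tmax (fun t => Rabs (X t - 0) < e /\ Rabs (Z t - 1) < e)).
  { apply ev_and; apply lim_ev; auto. }
  destruct (ev_closed _ _ Hev0) as [M0 [HM0d HM0]].
  assert (Hnear : forall t, t <= M0 ->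
    Rabs (X t) <= 1 /\ 1/2 <= D*X t^2+Z t^2-X t /\ D*X t^2 + Z t^2 - X t <= 2 /\
    0 <= 2*Z t - D*X t^2 - Z t^2 - X t /\ 1/2 <= Z t).
  { intros t Ht. destruct (HM0 t Ht) as [H1 H2]. rewrite Rminus_0_r in H1.
    apply near_facts; auto. }
  assert (HdW : forall t, in_dom tmax t -> derivable_pt_lim W t (W t * (D * X t ^ 2 + Z t ^ 2 - 2 * X t + Z t)))
    by (intros t Ht; apply (HS t Ht)).
  assert (HdY : forall t, in_dom tmax t -> derivable_pt_lim Y t (Y t * (D * X t ^ 2 + Z t ^ 2 - X t)))
    by (intros t Ht; apply (HS t Ht)).
  assert (HdX : forall t, in_dom tmax t -> derivable_pt_lim X t
      (X t * (D * X t ^ 2 + Z t ^ 2 - 1) + a2 / D * Y t ^ 2 - 2 * (a3 / D) * W t ^ 2))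
    by (intros t Ht; apply (HS t Ht)).
  set (h := fun s => W s * W s / (Y s * Y s * Y s)).
  assert (Hhd : forall t, t <= M0 -> derivable_pt_lim h t (h t * (2*Z t - D*X t^2 - Z t^2 - X t))).
  { intros t Ht. assert (Hdt := HM0d t Ht). destruct (HYW t Hdt) as [Yp Wp].
    eapply dlim_ext; [intro; reflexivity| |apply deriv_h; [apply HdW|apply HdY|]; auto].
    - unfold h, Rsqr. field. lra.
    - apply Rgt_not_eq. apply Rmult_gt_0_compat; [apply Rmult_gt_0_compat|]; lra. }
  set (cW := h M0).
  assert (HcW : 0 < cW).
  { unfold cW, h. destruct (HYW M0 (HM0d M0 (Rle_refl _))) as [Yp Wp].
    apply Rdiv_lt_0_compat; [nra|]. apply Rmult_gt_0_compat; [apply Rmult_gt_0_compat|]; lra. }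
  assert (HWY : forall t, t <= M0 -> W t ^ 2 <= cW * Y t ^ 3).
  { intros t Ht. assert (h t <= cW).
    { apply (mono_le h (fun s => h s * (2*Z s - D*X s^2 - Z s^2 - X s))); auto.
      - intros c Hc. apply Hhd. lra.
      - intros c Hc. destruct (HYW c (HM0d c ltac:(lra))) as [Yp Wp].
        apply Rmult_le_pos; [|apply (Hnear c); lra]. unfold h.
        left. apply Rdiv_lt_0_compat; [nra|]. apply Rmult_gt_0_compat; [apply Rmult_gt_0_compat|]; lra. }
    destruct (HYW t (HM0d t Ht)) as [Yp Wp]. unfold h in H.
    assert (0 < Y t * Y t * Y t) by (apply Rmult_gt_0_compat; [apply Rmult_gt_0_compat|]; lra).
    apply Rmult_le_compat_r with (r := Y t * Y t * Y t) in H; [|lra].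
    unfold Rdiv in H. rewrite Rmult_assoc, Rinv_l in H by lra. simpl. lra. }
  set (eY := Rmin (/ (2*cW)) (Rmin 1 (/(2*K)))).
  assert (HeY : 0 < eY).
  { unfold eY. apply Rmin_glb_lt; [apply Rinv_0_lt_compat; lra|apply Rmin_glb_lt; [lra|apply Rinv_0_lt_compat; lra]]. }
  assert (Hev1 : ev tmax (fun t => t < M0 /\ Rabs (Y t - 0) < eY)).
  { apply ev_and; [exists M0; auto|apply lim_ev; auto]. }
  destruct (ev_closed _ _ Hev1) as [M1 [HM1d HM1]].
  assert (HM10 : M1 <= M0) by (destruct (HM1 M1 (Rle_refl _)); lra).
  assert (Hgood : forall t, t <= M1 ->
     t <= M0 /\ in_dom tmax t /\ 0 < Y t /\ 0 < W t /\ 0 < g t /\ W t ^ 2 <= Y t ^ 2 /\ 2 * K * Y t ^ 2 <= 1 /\ cW * Y t <= 1/2 /\ Y t < 1).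
  { intros t Ht. destruct (HM1 t Ht) as [H1 H2]. assert (Hdt := HM1d t Ht).
    destruct (HYW t Hdt) as [Yp Wp]. destruct (Hg t Hdt) as [gp _].
    rewrite Rminus_0_r, Rabs_pos_eq in H2 by lra.
    assert (Y t <= / (2*cW)) by (unfold eY in H2; generalize (Rmin_l (/ (2*cW)) (Rmin 1 (/(2*K)))); lra).
    assert (Y t <= 1) by (unfold eY in H2; generalize (Rmin_r (/ (2*cW)) (Rmin 1 (/(2*K))) ) (Rmin_l 1 (/(2*K))); lra).
    assert (Y t <= /(2*K)) by (unfold eY in H2; generalize (Rmin_r (/ (2*cW)) (Rmin 1 (/(2*K))) ) (Rmin_r 1 (/(2*K))); lra).
    assert (HcY : cW * Y t <= 1/2).
    { apply Rmult_le_compat_l with (r := cW) in H; [|lra]. rewrite Rinv_mult in H.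
      replace (cW * (/2 * /cW)) with (/2) in H by (field; lra). lra. }
    assert (HKY : 2*K*Y t <= 1).
    { apply Rmult_le_compat_l with (r := 2*K) in H3; [|lra]. rewrite Rinv_r in H3 by lra. lra. }
    repeat split; try lra; try assumption.
    - assert (HWt := HWY t ltac:(lra)).
      assert (cW * Y t ^ 3 <= Y t ^ 2).
      { replace (cW * Y t ^ 3) with ((cW * Y t) * Y t ^ 2) by ring.
        assert (0 <= Y t ^ 2) by apply pow2_ge_0. nra. }
      lra.
    - simpl. nra.
    - unfold eY in H2. assert (Rmin (/ (2 * cW)) (Rmin 1 (/ (2 * K))) <= Rmin 1 (/ (2 * K))) by apply Rmin_r.
      assert (Rmin 1 (/ (2 * K)) <= 1) by apply Rmin_l. lra. }
  set (rho := fun s => D * X s ^ 2 + Z s ^ 2 - X s).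
  set (Xp := fun s => X s * (D * X s ^ 2 + Z s ^ 2 - 1) + a2 / D * Y s ^ 2 - 2 * (a3 / D) * W s ^ 2).
  assert (Hbar : forall c, c = 1 \/ c = -1 -> forall t, t <= M1 -> c * X t - K * (Y t * Y t) <= 0).
  { intros c Hc. apply (barrier (fun s => c * X s - K * (Y s * Y s))
       (fun s => c * Xp s - 2 * K * Y s ^ 2 * rho s) M1).
    - intros t Ht. destruct (Hgood t Ht) as [_ [Hdt _]].
      eapply dlim_ext; [intro; reflexivity| |apply deriv_F; [apply HdX|apply HdY]; auto].
      unfold Xp, rho. ring.
    - intros t Ht Hpos. destruct (Hgood t Ht) as [Ht0 [Hdt [Yp [Wp [gp [HWt _]]]]]].
      destruct (Hnear t Ht0) as [Hx1 [Hr1 _]].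
      assert (Hfi := HFI t Hdt). fold D a2 a3 in Hfi.
      destruct Hc as [-> | ->].
      + rewrite Rmult_1_l in Hpos. unfold Xp, rho. rewrite Rmult_1_l.
        apply (bar1 D a2 a3 C K (X t) (Y t) (Z t) (W t) (g t)); auto.
      + unfold Xp, rho.
        replace (-1 * X t - K * (Y t * Y t)) with (- X t - K * (Y t * Y t)) in Hpos by ring.
        replace (-1 * (X t * (D * X t ^ 2 + Z t ^ 2 - 1) + a2 / D * Y t ^ 2 - 2 * (a3 / D) * W t ^ 2))
          with (- (X t * (D * X t ^ 2 + Z t ^ 2 - 1) + a2 / D * Y t ^ 2 - 2 * (a3 / D) * W t ^ 2)) by ring.
        apply (bar2 D a2 a3 C K (X t) (Y t) (Z t) (W t) (g t)); auto.
    - apply (lim_to_upper tmax _ M1); auto. apply lim_F; auto. }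
  assert (HXK : forall t, t <= M1 -> Rabs (X t) <= K * Y t ^ 2).
  { intros t Ht. assert (H1 := Hbar 1 (or_introl eq_refl) t Ht).
    assert (H2 := Hbar (-1) (or_intror eq_refl) t Ht). apply Rabs_le. simpl. lra. }
  set (qf := fun s => g s * (1 + 2*K*(Y s*Y s))).
  set (pf := fun s => g s / (1 + 2*K*(Y s*Y s))).
  assert (Hbr : forall t, t <= M1 ->
     0 <= X t * (1 + 2*K*(Y t*Y t)) + 4*K*(Y t*Y t)*rho t /\
     X t * (1 + 2*K*(Y t*Y t)) - 4*K*(Y t*Y t)*rho t <= 0).
  { intros t Ht. destruct (Hgood t Ht) as [Ht0 [Hdt [Yp [Wp [gp [HWt [HKY _]]]]]]].
    destruct (Hnear t Ht0) as [_ [Hr1 _]]. fold (rho t) in Hr1.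
    assert (Hx := HXK t Ht). simpl in Hx, HKY.
    assert (Hxx : - (K*(Y t*(Y t*1))) <= X t <= K*(Y t*(Y t*1))) by (unfold Rabs in Hx; destruct (Rcase_abs (X t)); lra).
    set (u := 2*K*(Y t*Y t)) in *.
    assert (Hu : 0 <= u) by (unfold u; nra).
    assert (Hu1 : u <= 1) by (unfold u; nra).
    assert (Hk : 0 <= K*(Y t*Y t)) by nra.
    replace (Y t * (Y t * 1)) with (Y t * Y t) in Hxx by ring.
    split; nra. }
  assert (Hqmono : forall t s, t <= s -> s <= M1 -> qf t <= qf s).
  { intros t s Hts Hs.
    apply (mono_le qf (fun c => g c * (X c * (1 + 2*K*(Y c*Y c)) + 4*K*(Y c*Y c)*rho c))); auto.
    - intros c Hc. destruct (Hgood c ltac:(lra)) as [_ [Hdt _]].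
      eapply dlim_ext; [intro; reflexivity| |apply deriv_q; [apply Hg|apply HdY]; auto].
      unfold rho. ring.
    - intros c Hc. destruct (Hgood c ltac:(lra)) as [_ [_ [_ [_ [gp _]]]]].
      apply Rmult_le_pos; [lra|]. apply (Hbr c). lra. }
  assert (Hpmono : forall t s, t <= s -> s <= M1 -> pf s <= pf t).
  { intros t s Hts Hs.
    assert (- pf t <= - pf s); [|lra].
    apply (mono_le (fun c => - pf c)
       (fun c => - (g c * (X c * (1 + 2*K*(Y c*Y c)) - 4*K*(Y c*Y c)*rho c) / (1 + 2*K*(Y c*Y c))²))); auto.
    - intros c Hc. destruct (Hgood c ltac:(lra)) as [_ [Hdt _]].
      assert (0 <= K*(Y c*Y c)) by (apply Rmult_le_pos; [lra|apply Rle_0_sqr]).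
      apply (derivable_pt_lim_opp pf).
      eapply dlim_ext; [intro; reflexivity| |apply deriv_p; [apply Hg|apply HdY|]; auto].
      + unfold rho, Rdiv. ring.
      + lra.
    - intros c Hc. destruct (Hgood c ltac:(lra)) as [_ [_ [_ [_ [gp _]]]]].
      assert (0 <= K*(Y c*Y c)) by (apply Rmult_le_pos; [lra|apply Rle_0_sqr]).
      assert (0 < (1 + 2*K*(Y c*Y c))²) by (unfold Rsqr; nra).
      assert (g c * (X c * (1 + 2 * K * (Y c * Y c)) - 4 * K * (Y c * Y c) * rho c) <= 0).
      { assert (H1 := proj2 (Hbr c ltac:(lra))). nra. }
      unfold Rdiv. rewrite Ropp_mult_distr_l. apply Rmult_le_pos; [lra|].
      left; apply Rinv_0_lt_compat; lra. }
  assert (Hqg : forall t, t <= M1 -> 0 < g t /\ g t <= qf t /\ pf t <= g t /\ 1 <= 1 + 2*K*(Y t*Y t)).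
  { intros t Ht. destruct (Hgood t Ht) as [_ [_ [_ [_ [gp _]]]]].
    assert (0 <= K*(Y t*Y t)) by (apply Rmult_le_pos; [lra|apply Rle_0_sqr]).
    unfold qf, pf. repeat split; try lra.
    - nra.
    - apply (Rmult_le_reg_r (1 + 2*K*(Y t*Y t))); [lra|]. unfold Rdiv.
      rewrite Rmult_assoc, Rinv_l by lra. nra. }
  set (E := fun x => exists t, t <= M1 /\ x = - qf t).
  assert (HEb : bound E).
  { exists 0. intros x [t [Ht ->]]. destruct (Hqg t Ht) as [H1 [H2 _]]. lra. }
  assert (HEne : exists x, E x) by (exists (- qf M1); exists M1; split; [lra|reflexivity]).
  destruct (completeness E HEb HEne) as [m [Hub Hleast]].
  set (lam := - m).
  assert (Hl1 : forall t, t <= M1 -> lam <= qf t).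
  { intros t Ht. assert (- qf t <= m) by (apply Hub; exists t; auto). unfold lam; lra. }
  assert (Hl2 : forall eps, 0 < eps -> exists t, t <= M1 /\ qf t < lam + eps).
  { intros eps Heps. apply NNPP. intro Hn.
    assert (m <= m - eps); [|lra].
    apply Hleast. intros x [t [Ht ->]].
    destruct (Rlt_or_le (qf t) (lam + eps)) as [Hlt|Hle].
    - exfalso. apply Hn. exists t. auto.
    - unfold lam in Hle. lra. }
  assert (Hl3 : 0 < lam).
  { assert (m <= - pf M1).
    { apply Hleast. intros x [t [Ht ->]]. destruct (Hqg t Ht) as [_ [H2 [H3 _]]].
      assert (pf M1 <= pf t) by (apply Hpmono; lra). lra. }
    destruct (Hqg M1 (Rle_refl _)) as [H1 [_ [_ H4]]].
    assert (0 < pf M1).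
    { unfold pf. apply Rdiv_lt_0_compat; lra. }
    unfold lam; lra. }
  assert (Hglim : lim_minf tmax g lam).
  { intros eps Heps. destruct (Hl2 (eps/2) ltac:(lra)) as [ts [Hts Hq]].
    set (eta := Rmin 1 (eps / (4*K*(lam+eps)))).
    assert (Heta : 0 < eta).
    { unfold eta. apply Rmin_glb_lt; [lra|]. apply Rdiv_lt_0_compat; [lra|]. nra. }
    assert (Heta1 : eta <= 1) by apply Rmin_l.
    assert (Heta2 : eta * (4*K*(lam+eps)) <= eps).
    { assert (eta <= eps / (4*K*(lam+eps))) by apply Rmin_r.
      apply Rmult_le_compat_r with (r := 4*K*(lam+eps)) in H; [|nra].
      replace (eps / (4*K*(lam+eps)) * (4*K*(lam+eps))) with eps in H by (field; nra). lra. }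
    destruct (HY eta Heta) as [N HN]. exists (Rmin N ts). intros t Ht Hdt.
    assert (Rmin N ts <= N) by apply Rmin_l. assert (Rmin N ts <= ts) by apply Rmin_r.
    specialize (HN t ltac:(lra) Hdt). rewrite Rminus_0_r in HN.
    assert (HtM : t <= M1) by lra.
    destruct (Hgood t HtM) as [_ [_ [Yp _]]].
    rewrite Rabs_pos_eq in HN by lra.
    assert (Hq1 := Hl1 t HtM). assert (Hq2 : qf t <= qf ts) by (apply Hqmono; lra).
    destruct (Hqg t HtM) as [gp [Hgq _]].
    assert (Hu : 2*K*(Y t*Y t) < eps / (2*(lam+eps))).
    { assert (Y t * Y t <= Y t * eta) by (apply Rmult_le_compat_l; lra).
      assert (2*K*(Y t * eta) * (2*(lam+eps)) <= eps * Y t) by nra.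
      apply (Rmult_lt_reg_r (2*(lam+eps))); [lra|].
      replace (eps / (2*(lam+eps)) * (2*(lam+eps))) with eps by (field; lra).
      assert (0 < 4*K*(lam+eps)) by nra.
      assert ((Y t * Y t) * (4*K*(lam+eps)) <= (Y t * eta) * (4*K*(lam+eps))) by (apply Rmult_le_compat_r; lra).
      assert (eps * Y t < eps) by nra.
      lra. }
    assert (Hgu : g t * (2*K*(Y t*Y t)) < eps/2).
    { assert (0 <= 2*K*(Y t*Y t)) by (apply Rmult_le_pos; [lra|apply Rle_0_sqr]).
      assert (g t <= lam + eps) by lra.
      assert (g t * (2*K*(Y t*Y t)) <= (lam+eps) * (2*K*(Y t*Y t))) by nra.
      assert ((lam+eps) * (2*K*(Y t*Y t)) < (lam+eps) * (eps / (2*(lam+eps)))) by (apply Rmult_lt_compat_l; lra).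
      replace ((lam+eps) * (eps / (2*(lam+eps)))) with (eps/2) in H4 by (field; lra). lra. }
    assert (qf t = g t + g t * (2*K*(Y t*Y t))) by (unfold qf; ring).
    apply Rabs_def1; lra. }
  assert (Hev1M : ev tmax (fun t => t <= M1)) by (exists M1; intros; lra).
  assert (Ha : lim_minf tmax (fun t => X t / Y t) 0).
  { apply (lim_squeeze0 _ _ (fun t => K * Y t)).
    - eapply ev_mono; [exact Hev1M|]. intros t _ Ht.
      destruct (Hgood t Ht) as [_ [_ [Yp _]]]. assert (Hx := HXK t Ht).
      unfold Rdiv. rewrite Rabs_mult, Rabs_inv, (Rabs_pos_eq (Y t)) by lra.
      apply (Rmult_le_reg_r (Y t)); [lra|]. rewrite Rmult_assoc, Rinv_l by lra. simpl in *. nra.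
    - replace 0 with (K * 0) by ring. apply lim_mult; [apply lim_const|auto]. }
  assert (Hw : lim_minf tmax (fun t => W t ^ 2 / Y t ^ 2) 0).
  { apply (lim_squeeze0 _ _ (fun t => cW * Y t)).
    - eapply ev_mono; [exact Hev1M|]. intros t _ Ht.
      destruct (Hgood t Ht) as [Ht0 [_ [Yp _]]]. assert (Hx := HWY t Ht0).
      assert (0 < Y t ^ 2) by (simpl; nra).
      rewrite Rabs_pos_eq by (unfold Rdiv; apply Rmult_le_pos; [apply pow2_ge_0|left; apply Rinv_0_lt_compat; lra]).
      apply (Rmult_le_reg_r (Y t ^ 2)); [lra|].
      replace (W t ^ 2 / Y t ^ 2 * Y t ^ 2) with (W t ^ 2) by (field; lra).
      replace (cW * Y t * Y t ^ 2) with (cW * Y t ^ 3) by ring. lra.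
    - replace 0 with (cW * 0) by ring. apply lim_mult; [apply lim_const|auto]. }
  assert (HN := lim_mult tmax _ _ _ _
    (lim_plus tmax _ _ _ _
      (lim_plus tmax _ _ _ _
        (lim_plus tmax _ _ _ _ (lim_mult tmax _ _ _ _ (lim_const tmax D) (lim_mult tmax _ _ _ _ Ha Ha))
                               (lim_const tmax a2))
        (lim_mult tmax _ _ _ _ (lim_const tmax C) (lim_mult tmax _ _ _ _ Hglim Hglim)))
      (lim_mult tmax _ _ _ _ (lim_const tmax (-a3)) Hw))
    (lim_inv tmax _ _ (lim_plus tmax _ _ _ _ (lim_const tmax 1) HZ) ltac:(lra))).
  exists lam, ((D * (0 * 0) + a2 + C * (lam * lam) + - a3 * 0) * / (1 + 1)).
  split; [auto|]. split; [auto|]. split.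
  - eapply lim_ext; [|exact HN].
    eapply ev_mono; [exact Hev1M|]. intros t _ Ht.
    destruct (Hgood t Ht) as [Ht0 [Hdt [Yp _]]].
    destruct (Hnear t Ht0) as [_ [_ [_ [_ Hz]]]].
    assert (Hfi := HFI t Hdt). fold D a2 a3 in Hfi.
    assert (E1 : 1 - Z t = (1 - Z t ^ 2) / (1 + Z t)) by (field; lra).
    rewrite E1.
    replace (1 - Z t ^ 2) with (D * X t ^ 2 + a2 * Y t ^ 2 - a3 * W t ^ 2 + C * (g t * Y t) ^ 2) by lra.
    field. lra.
  - field.
Qed.
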